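(* Let $S$ be an LAD-AG-groupoid. Then $S$ is an AG$^{**}$-groupoid, i.e. $a(bc)=b(ac)$ for all $a,b,c\in S$.
   Context: A groupoid is a set $S$ with a binary operation written as juxtaposition; $ab\cdot c$ means $(ab)c$ and $a\cdot bc$ means $a(bc)$. An AG-groupoid is a groupoid satisfying the left invertive law $(ab)c=(cb)a$ for all $a,b,c\in S$. An LAD-AG-groupoid (left abelian distributive AG-groupoid) is an AG-groupoid satisfying $a(bc)=(ab)(ca)$ for all $a,b,c\in S$. *)

(* Defs.v *)
Definition AG_groupoid {S : Type} (op : S -> S -> S) : Prop :=
  forall a b c : S, op (op a b) c = op (op c b) a.

Definition LAD_AG_groupoid {S : Type} (op : S -> S -> S) : Prop :=
  AG_groupoid op /\ forall a b c : S, op a (op b c) = op (op a b) (op c a).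

Definition AGss_groupoid {S : Type} (op : S -> S -> S) : Prop :=
  AG_groupoid op /\ forall a b c : S, op a (op b c) = op b (op a c).

(* Main.v *)
Require Import Defs.

Theorem mainTheorem3 (S : Type) (op : S -> S -> S) :
  LAD_AG_groupoid op -> AGss_groupoid op.
Proof.
  intros [LI LAD0].
  split; [exact LI|].
  assert (MED : forall x y z w, op (op x y) (op z w) = op (op x z) (op y w)).
  { intros x y z w. rewrite (LI x y (op z w)), (LI z w y).
    rewrite (LI x z (op y w)). reflexivity. }
  assert (LAD : forall x y z, op x (op y z) = op (op x y) (op z x)) by exact LAD0.
  assert (SW : forall x y z, op x (op y z) = op x (op z y)).
  { intros x y z. rewrite (LAD x y z), (MED x y z x), (LAD x z y). reflexivity. }
  intros a b c.
  transitivity (op (op a b) (op c a)); [ pose proof (LAD a b c); congruence |].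
  transitivity (op (op (op a b) c) (op a (op a b))); [ pose proof (LAD (op a b) c a); congruence |].
  transitivity (op (op (op a (op a b)) c) (op a b)); [ pose proof (LI (op a b) c (op a (op a b))); congruence |].
  transitivity (op (op (op a (op a b)) c) (op b a)); [ pose proof (SW (op (op a (op a b)) c) a b); congruence |].
  transitivity (op (op (op b a) c) (op a (op a b))); [ pose proof (LI (op a (op a b)) c (op b a)); congruence |].
  transitivity (op (op (op b a) c) (op a (op b a))); [ pose proof (SW a a b); congruence |].
  transitivity (op (op (op b a) c) (op (op b a) a)); [ pose proof (SW (op (op b a) c) a (op b a)); congruence |].
  transitivity (op (op (op b a) c) (op (op a a) b)); [ pose proof (LI b a a); congruence |].
  transitivity (op (op (op b a) c) (op b (op a a))); [ pose proof (SW (op (op b a) c) (op a a) b); congruence |].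
  transitivity (op (op (op b a) c) (op (op b a) (op a b))); [ pose proof (LAD b a a); congruence |].
  transitivity (op (op (op b a) c) (op (op a b) (op b a))); [ pose proof (SW (op (op b a) c) (op b a) (op a b)); congruence |].
  transitivity (op (op (op b a) c) (op a (op b b))); [ pose proof (LAD a b b); congruence |].
  transitivity (op (op (op b a) c) (op (op b b) a)); [ pose proof (SW (op (op b a) c) a (op b b)); congruence |].
  transitivity (op (op (op b a) c) (op (op a b) b)); [ pose proof (LI b b a); congruence |].
  transitivity (op (op (op b a) c) (op b (op a b))); [ pose proof (SW (op (op b a) c) (op a b) b); congruence |].
  transitivity (op (op (op b a) c) (op b (op b a))); [ pose proof (SW b a b); congruence |].
  transitivity (op (op b a) (op c b)); [ pose proof (LAD (op b a) c b); congruence |].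
  transitivity (op b (op a c)); [ pose proof (LAD b a c); congruence |].
  reflexivity.
Qed.
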